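(* Let $(R,d)$ be a differential ring having Property (P). (i) For any morphism $\varphi:M\to N$ of finite free differential modules over $R$, the kernel and cokernel of $\varphi$ (as differential modules) are again finite free; consequently the category of finite free differential modules over $R$ is an abelian subcategory of the category of differential modules over $R$. (ii) If $\varphi:M\to N$ is an injective morphism of finite free differential modules over $R$ and $M$, $N$ have the same rank, then $\varphi$ is an isomorphism. (iii) If $\varphi:M\to N$ is an injective morphism of finite free differential modules over $R$, then $\wedge^n\varphi:\wedge^nM\to\wedge^nN$ is injective for every $n\in\mathbb N$.
   Context: A differential ring is a commutative ring $R$ with a derivation $d$. A differential module over $R$ is an $R$-module $M$ with an additive map $D$ satisfying $D(rx)=d(r)x+rD(x)$; morphisms are $R$-linear maps commuting with $D$; it is finite free of rank $m$ if the underlying module is. Exterior powers carry $D(x_1\wedge\dots\wedge x_n)=\sum_i x_1\wedge\dots\wedge D(x_i)\wedge\dots\wedge x_n$. A ring is an elementary divisor ring if every matrix $A\in M_{m\times n}(R)$ can be brought, by multiplication by invertible matrices on both sides, to a diagonal matrix with diagonal entries $d_1\mid d_2\mid\dots\mid d_{\min(m,n)}$; an elementary divisor domain is such an integral domain. $R$ satisfies Condition (S) if every principal ideal $I$ with $d(I)\subset I$ is $(0)$ or $(1)$. Property (P): $R$ is an elementary divisor domain satisfying Condition (S). *)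

(* Defs.v *)
From HB Require Import structures.
From mathcomp Require Import all_boot all_order all_algebra.
Set Implicit Arguments. Unset Strict Implicit. Unset Printing Implicit Defensive.
Import Order.TTheory GRing.Theory Num.Theory.
Local Open Scope ring_scope.

Section Defs.
Variable R : idomainType.

Definition is_derivation (d : R -> R) : Prop :=
  (forall x y, d (x + y) = d x + d y) /\ (forall x y, d (x * y) = d x * y + x * d y).

Definition dvdR (a b : R) : Prop := exists c, b = c * a.

Definition diag_divchain m n (D : 'M[R]_(m, n)) : Prop :=
  (forall (i : 'I_m) (j : 'I_n), (i : nat) <> j -> D i j = 0) /\
  (forall (i1 i2 : 'I_m) (j1 j2 : 'I_n),
      (i1 : nat) = j1 -> (i2 : nat) = j2 -> (i1 <= i2)%N -> dvdR (D i1 j1) (D i2 j2)).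

Definition elementary_divisor_ring : Prop :=
  forall m n (A : 'M[R]_(m, n)), exists (P : 'M[R]_m) (Q : 'M[R]_n),
    P \in unitmx /\ Q \in unitmx /\ diag_divchain (P *m A *m Q).

Definition pideal (a : R) (x : R) : Prop := exists r, x = r * a.

Definition condition_S (d : R -> R) : Prop :=
  forall a : R, (forall x, pideal a x -> pideal a (d x)) ->
    (forall x, pideal a x <-> x = 0) \/ (forall x, pideal a x).

(* Property (P): R (an integral domain, by its type) is an elementary divisor
   domain satisfying Condition (S). *)
Definition property_P (d : R -> R) : Prop :=
  elementary_divisor_ring /\ condition_S d.

(* A finite free differential module of rank m is represented, in a basis,
   by R^m (row vectors) with D x = d(x) + x A, for a matrix A : 'M_m
   (row i of A = coordinates of D(e_i)). *)
Definition Dmod (d : R -> R) m (A : 'M[R]_m) (x : 'rV[R]_m) : 'rV[R]_m :=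
  map_mx d x + x *m A.

Definition is_dmorphism (d : R -> R) m k (A : 'M[R]_m) (B : 'M[R]_k)
  (P : 'M[R]_(m, k)) : Prop :=
  forall x : 'rV[R]_m, Dmod d B (x *m P) = Dmod d A x *m P.

(* n-element subsets of 'I_m: index the standard basis e_I of wedge^n R^m *)
Definition nsubset (m n : nat) := {I : {set 'I_m} | #|I| == n}.

(* the (I,J) n x n minor of P (rows of I and columns of J in increasing order) *)
Definition minor m k n (P : 'M[R]_(m, k)) (I : nsubset m n) (J : nsubset k n) : R :=
  \det (\matrix_(a < n, b < n)
          P (enum_val (cast_ord (esym (eqP (valP I))) a))
            (enum_val (cast_ord (esym (eqP (valP J))) b))).

(* wedge^n of x |-> x P, in the bases (e_I): e_I |-> sum_J minor P I J e_J *)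
Definition wedge_map m k n (P : 'M[R]_(m, k))
  (v : {ffun nsubset m n -> R}) : {ffun nsubset k n -> R} :=
  [ffun J => \sum_(I : nsubset m n) v I * minor P I J].

End Defs.

(* Main.v *)
Require Import Defs.
From HB Require Import structures.
From mathcomp Require Import all_boot all_order all_algebra fingroup perm.
Set Implicit Arguments. Unset Strict Implicit. Unset Printing Implicit Defensive.
Import GRing.Theory.
Local Open Scope ring_scope.

Section Der.
Variable R : idomainType.
Variable d : R -> R.
Hypothesis Hd : is_derivation d.

Lemma d0 : d 0 = 0.
Proof. case: Hd => hA _. have h := hA 0 0; rewrite addr0 in h. by apply: (addrI (d 0)); rewrite addr0 -h. Qed.

Lemma d1 : d 1 = 0.
Proof. case: Hd => _ hM. have h := hM 1 1; rewrite !mulr1 mul1r in h. by apply: (addrI (d 1)); rewrite addr0 -h. Qed.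

Lemma dD x y : d (x + y) = d x + d y. Proof. by case: Hd. Qed.
Lemma dM x y : d (x * y) = d x * y + x * d y. Proof. by case: Hd. Qed.

Lemma dN x : d (- x) = - d x.
Proof. apply/eqP; rewrite -subr_eq0 opprK -dD addNr d0 //. Qed.

Lemma dsum I (r : seq I) (P : pred I) (F : I -> R) :
  d (\sum_(i <- r | P i) F i) = \sum_(i <- r | P i) d (F i).
Proof. exact: (big_morph d dD d0). Qed.

Lemma map_mx_d_mul m n p (A : 'M[R]_(m, n)) (B : 'M[R]_(n, p)) :
  map_mx d (A *m B) = map_mx d A *m B + A *m map_mx d B.
Proof.
apply/matrixP=> i j; rewrite !mxE dsum -big_split /=.
by apply: eq_bigr => l _; rewrite !mxE dM.
Qed.

Lemma map_mx_dD m n (A B : 'M[R]_(m, n)) : map_mx d (A + B) = map_mx d A + map_mx d B.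
Proof. by apply/matrixP=> i j; rewrite !mxE dD. Qed.

Lemma map_mx_dZ m n a (A : 'M[R]_(m, n)) : map_mx d (a *: A) = d a *: A + a *: map_mx d A.
Proof. by apply/matrixP=> i j; rewrite !mxE dM. Qed.

Lemma map_mx_d1 n : map_mx d (1%:M : 'M[R]_n) = 0.
Proof. by apply/matrixP=> i j; rewrite !mxE; case: (i == j); rewrite /= ?d1 ?d0. Qed.

Lemma rows_eq m n (M N : 'M[R]_(m, n)) : (forall x : 'rV_m, x *m M = x *m N) -> M = N.
Proof. move=> h; apply/row_matrixP => i; by rewrite !rowE h. Qed.

Lemma dmorphE m k (A : 'M[R]_m) (B : 'M[R]_k) (P : 'M[R]_(m, k)) :
  is_dmorphism d A B P <-> map_mx d P + P *m B = A *m P.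
Proof.
rewrite /is_dmorphism /Dmod; split => [h|h x].
  apply: rows_eq => x; have := h x.
  rewrite map_mx_d_mul mulmxDl -addrA => /addrI.
  by rewrite mulmxDr !mulmxA.
rewrite map_mx_d_mul mulmxDl -[x *m A *m P]mulmxA -h mulmxDr mulmxA addrA //.
Qed.

End Der.

Section Sel.
Variable R : idomainType.

Definition sel (r m : nat) : 'M[R]_(m - r, m) :=
  \matrix_(l, j) ((j : nat) == (r + l)%N)%:R.

Lemma sel_selT r m : sel r m *m (sel r m)^T = 1%:M.
Proof.
apply/matrixP => l l'; rewrite !mxE.
have hl : (r + l < m)%N by have := ltn_ord l; rewrite ltn_subRL.
rewrite (bigD1 (Ordinal hl)) //= big1 ?addr0.
  rewrite !mxE /= eqxx mul1r eqn_add2l.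
  by [].
move=> j hj; rewrite !mxE.
case: eqP => [e|]; last by rewrite mul0r.
by exfalso; move/eqP: hj; apply; apply: val_inj; rewrite /= e.
Qed.

Lemma selT_sel r m : (sel r m)^T *m sel r m = copid_mx r.
Proof.
apply/matrixP => i j; rewrite !mxE.
have [hri|hri] := leqP r i.
  have hl : (i - r < m - r)%N by rewrite ltn_sub2r // (leq_ltn_trans hri).
  rewrite (bigD1 (Ordinal hl)) //= big1 ?addr0.
    rewrite !mxE /= subnKC // eqxx mul1r andbF subr0.
    by rewrite eq_sym.
  move=> l hl'; rewrite !mxE.
  case: eqP => [e|]; last by rewrite mul0r.
  by exfalso; move/eqP: hl'; apply; apply: val_inj; rewrite /= e addKn.
rewrite big1.
  by rewrite andbT subrr.
move=> l _; rewrite !mxE.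
case: eqP => [e|]; last by rewrite mul0r.
by move: hri; rewrite e ltnNge leq_addr.
Qed.

End Sel.

Section Down.
Variable R : idomainType.
Variable d : R -> R.
Hypothesis Hd : is_derivation d.
Variables (m k r : nat) (A : 'M[R]_m) (B : 'M[R]_k) (P : 'M[R]_(m, k)) (U : 'M[R]_m) (V : 'M[R]_k).
Hypotheses (hrm : (r <= m)%N) (hrk : (r <= k)%N) (hU : U \in unitmx) (hV : V \in unitmx)
  (hUPV : U *m P *m V = pid_mx r) (hdP : is_dmorphism d A B P).

Lemma sel_pid n p : (r <= n)%N -> sel R r n *m (pid_mx r : 'M_(n, p)) = 0.
Proof.
move=> h.
have e : sel R r n = sel R r n *m copid_mx r by rewrite -selT_sel mulmxA sel_selT mul1mx.
by rewrite e -mulmxA mul_copid_mx_pid // mulmx0.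
Qed.

Lemma PE : P = invmx U *m pid_mx r *m invmx V.
Proof. by rewrite -hUPV !mulmxA mulVmx // mul1mx mulmxK. Qed.

Lemma dPE : map_mx d P + P *m B = A *m P.
Proof. exact/(dmorphE Hd). Qed.

Definition Kmx := sel R r m *m U.
Definition Lmx := invmx U *m (sel R r m)^T.

Lemma KL : Kmx *m Lmx = 1%:M.
Proof. by rewrite /Kmx /Lmx mulmxA mulmxK // sel_selT. Qed.

Lemma KP : Kmx *m P = 0.
Proof. by rewrite /Kmx PE !mulmxA mulmxK // sel_pid // !mul0mx. Qed.

Lemma ker_mat s (X : 'M[R]_(s, m)) : X *m P = 0 -> X = X *m Lmx *m Kmx.
Proof.
move=> hX.
have h1 : X *m invmx U *m pid_mx r = 0 :> 'M_(s, k).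
  by move: hX; rewrite PE !mulmxA => /(congr1 (mulmx^~ V)); rewrite mulmxKV // mul0mx.
have h2 : X *m invmx U *m pid_mx r = 0 :> 'M_(s, m).
  by rewrite -(@pid_mx_id R m k m r hrk) mulmxA h1 mul0mx.
rewrite /Lmx /Kmx !mulmxA -[X *m invmx U *m (sel R r m)^T *m sel R r m]mulmxA selT_sel.
by rewrite /copid_mx mulmxBr mulmx1 h2 subr0 mulmxKV.
Qed.

Definition Cker := (map_mx d Kmx + Kmx *m A) *m Lmx.

Lemma Cker_dmorph : is_dmorphism d Cker A Kmx.
Proof.
apply/(dmorphE Hd); rewrite /Cker -ker_mat //.
have e : map_mx d (Kmx *m P) = 0 by rewrite KP; apply/matrixP=> i j; rewrite !mxE d0.
rewrite map_mx_d_mul // in e.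
by rewrite mulmxDl -mulmxA -dPE mulmxDr mulmxA KP mul0mx addr0.
Qed.

Definition Qmx := V *m (sel R r k)^T.
Definition Qtmx := sel R r k *m invmx V.

Lemma QtQ : Qtmx *m Qmx = 1%:M.
Proof. by rewrite /Qmx /Qtmx mulmxA mulmxKV // sel_selT. Qed.

Lemma PQ : P *m Qmx = 0.
Proof.
rewrite /Qmx PE !mulmxA mulmxKV // -mulmxA.
have -> : (pid_mx r : 'M_(m, k)) *m (sel R r k)^T = 0.
  by apply: trmx_inj; rewrite trmx_mul trmxK tr_pid_mx sel_pid // trmx0.
by rewrite mulmx0.
Qed.

Lemma coker_mat s (Y : 'M[R]_(s, k)) : Y *m Qmx = 0 ->
  Y = (Y *m V *m pid_mx r *m U) *m P.
Proof.
move=> hY.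
have h1 : Y *m V *m copid_mx r = 0.
  by rewrite -selT_sel mulmxA -(mulmxA Y) -/Qmx hY mul0mx.
rewrite PE !mulmxA mulmxK // -(mulmxA _ (pid_mx r)) pid_mx_id //.
move: h1; rewrite /copid_mx mulmxBr mulmx1 => /eqP; rewrite subr_eq0 => /eqP <-.
by rewrite mulmxK.
Qed.

Definition Ccok := Qtmx *m (B *m Qmx - map_mx d Qmx).

Lemma Ccok_dmorph : is_dmorphism d B Ccok Qmx.
Proof.
apply/(dmorphE Hd); rewrite /Ccok.
set W := B *m Qmx - map_mx d Qmx.
have hPW : P *m W = 0.
  have e : map_mx d (P *m Qmx) = 0 by rewrite PQ; apply/matrixP=> i j; rewrite !mxE d0.
  rewrite map_mx_d_mul // in e.
  have e2 : P *m map_mx d Qmx = P *m B *m Qmx.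
    have -> : P *m map_mx d Qmx = - (map_mx d P *m Qmx) by apply/eqP; rewrite -addr_eq0 addrC e.
    have -> : map_mx d P = A *m P - P *m B by rewrite -dPE addrK.
    by rewrite mulmxBl -[A *m P *m Qmx]mulmxA PQ mulmx0 sub0r opprK.
  by rewrite /W mulmxBr e2 mulmxA subrr.
have hQQ : Qmx *m Qtmx = 1%:M - V *m pid_mx r *m invmx V.
  by rewrite /Qmx /Qtmx mulmxA -(mulmxA V) selT_sel /copid_mx mulmxBr mulmxBl mulmx1 mulmxV.
have hUP : U *m P = pid_mx r *m invmx V by rewrite PE !mulmxA mulmxV // mul1mx.
rewrite mulmxA hQQ mulmxBl mul1mx -(@pid_mx_id R k m k r hrm) -!mulmxA.
rewrite (mulmxA (pid_mx r) (invmx V)) -hUP -mulmxA hPW !mulmx0 subr0.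
by rewrite /W addrC subrK.
Qed.
Lemma inj_r : injective (fun x : 'rV[R]_m => x *m P) -> r = m.
Proof.
move=> hinj; apply/eqP; rewrite eqn_leq hrm /=; rewrite leqNgt; apply/negP => hr.
pose x : 'rV[R]_m := delta_mx 0 (Ordinal hr) *m U.
have hx : x *m P = 0 *m P.
  rewrite mul0mx /x PE !mulmxA mulmxK // -rowE.
  have -> : row (Ordinal hr) (pid_mx r : 'M[R]_(m, k)) = 0.
    by apply/matrixP => i j; rewrite !mxE /= ltnn andbF.
  by rewrite mul0mx.
have := hinj _ _ hx; rewrite /x => /(congr1 (mulmx^~ (invmx U))).
rewrite mulmxK // mul0mx => /matrixP /(_ 0 (Ordinal hr)).
by rewrite !mxE !eqxx /= => /eqP; rewrite oner_eq0.
Qed.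

Lemma rinv : injective (fun x : 'rV[R]_m => x *m P) ->
  P *m (V *m pid_mx m *m U) = 1%:M.
Proof.
move=> /inj_r er; rewrite PE er !mulmxA mulmxKV // -(mulmxA _ (pid_mx m)).
have hmk : (m <= k)%N by rewrite -er.
by rewrite mulmxA -(mulmxA (invmx U)) (@pid_mx_id R m k m m hmk) pid_mx_1 mulmx1 mulVmx.
Qed.

End Down.

Section Sq.
Variable R : idomainType.
Variable d : R -> R.
Hypothesis Hd : is_derivation d.
Variables (m r : nat) (A B P U V : 'M[R]_m).
Hypotheses (hrm : (r <= m)%N) (hU : U \in unitmx) (hV : V \in unitmx)
  (hUPV : U *m P *m V = pid_mx r) (hdP : is_dmorphism d A B P)
  (hinj : injective (fun x : 'rV[R]_m => x *m P)).

Lemma sq_iso : exists Q : 'M[R]_m,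
       is_dmorphism d B A Q /\ P *m Q = 1%:M /\ Q *m P = 1%:M.
Proof.
have er := inj_r hrm hU hV hUPV hinj.
have hP : P = invmx U *m invmx V by rewrite (PE hU hV hUPV) er pid_mx_1 mulmx1.
have hPQ : P *m (V *m U) = 1%:M by rewrite hP mulmxA mulmxKV // mulVmx.
have hQP : (V *m U) *m P = 1%:M by rewrite hP mulmxA mulmxK // mulmxV.
exists (V *m U); split; last by [].
apply/(dmorphE Hd).
have dP := dPE Hd hdP.
have e : map_mx d (P *m (V *m U)) = 0 by rewrite hPQ map_mx_d1.
rewrite map_mx_d_mul // in e.
set Q := V *m U in hPQ hQP e *.
have e1 : map_mx d Q = - (Q *m map_mx d P *m Q).
  apply/eqP; rewrite -addr_eq0 -mulmxA -[map_mx d Q]mul1mx -hQP -mulmxA -mulmxDr addrC e mulmx0 //.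
have dP' : map_mx d P = A *m P - P *m B by rewrite -dP addrK.
have h1 : Q *m (A *m P) *m Q = Q *m A by rewrite mulmxA -mulmxA hPQ mulmx1.
have h2 : Q *m (P *m B) *m Q = B *m Q by rewrite mulmxA hQP mul1mx.
by rewrite e1 dP' mulmxBr mulmxBl h1 h2 opprB subrK.
Qed.
End Sq.

Section CB.
Variable R : idomainType.

Definition eJ k n (J : nsubset k n) (a : 'I_n) : 'I_k :=
  enum_val (cast_ord (esym (eqP (valP J))) a).

Lemma eJ_inj k n (J : nsubset k n) : injective (eJ J).
Proof. by move=> a b /enum_val_inj /cast_ord_inj. Qed.

Lemma eJ_mem k n (J : nsubset k n) a : eJ J a \in val J.
Proof. exact: enum_valP. Qed.

Lemma eJ_onto k n (J : nsubset k n) x : x \in val J -> exists a, eJ J a = x.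
Proof.
move=> hx; exists (cast_ord (eqP (valP J)) (enum_rank_in hx x)).
by rewrite /eJ cast_ordK enum_rankK_in.
Qed.

Definition phiJ k n (p : (nsubset k n * 'S_n)%type) : {ffun 'I_n -> 'I_k} :=
  [ffun i => eJ p.1 (p.2 i)].

Lemma mem_phiJ k n (p : (nsubset k n * 'S_n)%type) x :
  (x \in val p.1) = [exists i, phiJ p i == x].
Proof.
apply/idP/existsP => [hx | [i /eqP <-]]; last by rewrite ffunE eJ_mem.
case: (eJ_onto hx) => a <-; exists ((p.2)^-1%g a); by rewrite ffunE permKV.
Qed.

Lemma phiJ_inj k n : injective (@phiJ k n).
Proof.
move=> [J s] [J' s'] e.
have eJJ : J = J'.
  apply: val_inj; apply/setP => x.
  by rewrite (mem_phiJ (J, s)) (mem_phiJ (J', s')) e.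
subst J'; congr (_, _); apply/permP => i.
by apply: (@eJ_inj _ _ J); move/ffunP: e => /(_ i); rewrite !ffunE.
Qed.

Lemma phiJ_img k n (f : {ffun 'I_n -> 'I_k}) :
  (f \in [set phiJ p | p in [set: (nsubset k n * 'S_n)%type]]) = injectiveb f.
Proof.
apply/imsetP/injectiveP => [[[J s] _ ->] | hf].
  by move=> i j; rewrite !ffunE => /eJ_inj /perm_inj.
have hc : #|f @: [set: 'I_n]| == n by rewrite card_imset // cardsT card_ord.
pose J : nsubset k n := exist (fun I : {set 'I_k} => #|I| == n) _ hc.
have hfi i : f i \in val J by rewrite /= imset_f.
pose t i := cast_ord (eqP (valP J)) (enum_rank_in (hfi i) (f i)).
have ht i : eJ J (t i) = f i by rewrite /eJ /t cast_ordK enum_rankK_in.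
have tinj : injective t by move=> i j e; apply: hf; rewrite -!ht e.
exists (J, perm tinj); first by rewrite inE.
by apply/ffunP => i; rewrite ffunE /= permE ht.
Qed.

Lemma det_row_perm n (s : 'S_n) (M : 'M[R]_n) :
  \det (\matrix_(i, j) M (s i) j) = (-1) ^+ s * \det M.
Proof.
have -> : \matrix_(i, j) M (s i) j = perm_mx s *m M.
  by rewrite -row_permE; apply/matrixP => i j; rewrite !mxE.
by rewrite det_mulmx det_perm.
Qed.

Lemma cauchy_binet n k (X : 'M[R]_(n, k)) (Y : 'M[R]_(k, n)) :
  \det (X *m Y) = \sum_(J : nsubset k n)
     \det (\matrix_(a, b) X a (eJ J b)) * \det (\matrix_(a, b) Y (eJ J a) b).
Proof.
pose H (f : {ffun 'I_n -> 'I_k}) := (\prod_i X i (f i)) * \det (\matrix_(i, j) Y (f i) j).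
transitivity (\sum_f H f).
  transitivity (\sum_(s : 'S_n) (-1) ^+ s *
      \sum_(f : {ffun 'I_n -> 'I_k}) \prod_i (X i (f i) * Y (f i) (s i))).
    apply: eq_bigr => s _; congr (_ * _).
    rewrite -(bigA_distr_bigA (fun i l => X i l * Y l (s i))) /=.
    by apply: eq_bigr => i _; rewrite mxE.
  under eq_bigr do rewrite big_distrr.
  rewrite exchange_big; apply: eq_bigr => f _ /=.
  rewrite /H big_distrr; apply: eq_bigr => s _ /=.
  rewrite big_split /= mulrCA; congr (_ * (_ * _)).
  by apply: eq_bigr => i _; rewrite mxE.
rewrite [LHS](bigID (fun f : {ffun 'I_n -> 'I_k} => injectiveb f)) /= addrC big1 ?add0r; last first.
  move=> f /injectivePn [i1 [i2 hne he]].
  by rewrite /H (determinant_alternate hne) ?mulr0 // => j; rewrite !mxE he.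
symmetry.
transitivity (\sum_J \sum_(s : 'S_n) H (phiJ (J, s))).
  apply: eq_bigr => J _; rewrite big_distrl /=; apply: eq_bigr => s _.
  rewrite /H.
  have -> : \matrix_(i, j) Y (phiJ (J, s) i) j =
      \matrix_(i, j) (\matrix_(a, b) Y (eJ J a) b) (s i) j.
    by apply/matrixP => i j; rewrite !mxE ffunE.
  rewrite det_row_perm -mulrA mulrCA; congr (_ * _).
  by apply: eq_bigr => i _; rewrite mxE ffunE.
rewrite pair_big /=.
rewrite (eq_bigl (fun f => f \in [set phiJ p | p in [set: (nsubset k n * 'S_n)%type]])); last first.
  by move=> f; rewrite phiJ_img.
rewrite big_imset /=; last by move=> p q _ _; apply: phiJ_inj.
by apply: eq_big => [p|[J s] _]; rewrite ?inE.
Qed.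

End CB.

Section Wedge.
Variable R : idomainType.

Lemma minor_mul m k p n (P : 'M[R]_(m, k)) (Q : 'M[R]_(k, p)) (I : nsubset m n) (L : nsubset p n) :
  minor (P *m Q) I L = \sum_(J : nsubset k n) minor P I J * minor Q J L.
Proof.
have -> : minor (P *m Q) I L =
   \det ((\matrix_(a, j) P (eJ I a) j) *m (\matrix_(j, b) Q j (eJ L b))).
  rewrite /minor; congr (\det _); apply/matrixP => a b; rewrite !mxE.
  by apply: eq_bigr => j _; rewrite !mxE.
rewrite cauchy_binet; apply: eq_bigr => J _.
by rewrite /minor; congr (_ * _); congr (\det _); apply/matrixP => a b; rewrite !mxE.
Qed.

Lemma minor1 m n (I L : nsubset m n) : minor (1%:M : 'M[R]_m) I L = (I == L)%:R.
Proof.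
case: (eqVneq I L) => [<-|hne].
  rewrite /minor -[RHS](det1 R n); congr (\det _); apply/matrixP => a b; rewrite !mxE.
  by rewrite -/(eJ I a) -/(eJ I b) (inj_eq (@eJ_inj _ _ I)).
have : ~~ (val I \subset val L).
  apply/negP => hs; move/negP: hne; apply; apply/eqP/val_inj/eqP.
  by rewrite eqEcard hs (eqP (valP I)) (eqP (valP L)) leqnn.
case/subsetPn => x hxI hxL.
case: (eJ_onto hxI) => a ha.
rewrite /minor (expand_det_row _ a) big1 // => b _.
rewrite !mxE -/(eJ I a) -/(eJ L b) ha.
case: (x =P eJ L b) => [e|]; last by rewrite mul0r.
by move: hxL; rewrite e eJ_mem.
Qed.

Lemma wedge_comp m k p n (P : 'M[R]_(m, k)) (Q : 'M[R]_(k, p)) v :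
  wedge_map (n := n) Q (wedge_map P v) = wedge_map (P *m Q) v.
Proof.
apply/ffunP => L; rewrite !ffunE.
under eq_bigr do rewrite ffunE big_distrl /=.
rewrite exchange_big /=; apply: eq_bigr => I _.
by rewrite minor_mul big_distrr /=; apply: eq_bigr => J _; rewrite mulrA.
Qed.

Lemma wedge1 m n v : wedge_map (n := n) (1%:M : 'M[R]_m) v = v.
Proof.
apply/ffunP => L; rewrite ffunE (bigD1 L) //= big1 ?addr0.
  by rewrite minor1 eqxx mulr1.
by move=> I hI; rewrite minor1 (negPf hI) mulr0.
Qed.

Lemma wedge_inj m k n (P : 'M[R]_(m, k)) (Q : 'M[R]_(k, m)) :
  P *m Q = 1%:M -> injective (@wedge_map R m k n P).
Proof.
move=> hPQ v w e.
by rewrite -(wedge1 v) -(wedge1 w) -hPQ -!wedge_comp e.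
Qed.

End Wedge.

Section Diag.
Variable R : idomainType.
Variables (m k : nat) (S : 'M[R]_(m, k)).
Hypothesis hdiag : forall (i : 'I_m) (j : 'I_k), (i : nat) <> j -> S i j = 0.

Lemma diag_entry (x : 'rV[R]_m) (i : 'I_m) (j : 'I_k) :
  (i : nat) = j -> (x *m S) 0 j = x 0 i * S i j.
Proof.
move=> e; rewrite mxE (bigD1 i) //= big1 ?addr0 // => i' hi'.
rewrite hdiag ?mulr0 // => e'; move/eqP: hi'; apply; apply: val_inj; by rewrite /= e' e.
Qed.

Lemma diag_zero (x : 'rV[R]_m) (j : 'I_k) :
  (forall i : 'I_m, (i : nat) = j -> S i j = 0) -> (x *m S) 0 j = 0.
Proof.
move=> h; rewrite mxE big1 // => i _.
case: (eqVneq (i : nat) j) => [/eqP e|/eqP ne]; first by rewrite h ?mulr0 //; apply/eqP.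
by rewrite hdiag ?mulr0.
Qed.

End Diag.

Section Core.
Variable R : idomainType.
Variable d : R -> R.
Hypothesis Hd : is_derivation d.
Hypothesis HP : property_P d.

Lemma core m k (A : 'M[R]_m) (B : 'M[R]_k) (P : 'M[R]_(m, k)) :
  is_dmorphism d A B P -> exists r (U : 'M[R]_m) (V : 'M[R]_k),
    [/\ (r <= m)%N, (r <= k)%N, U \in unitmx, V \in unitmx & U *m P *m V = pid_mx r].
Proof.
move=> hdP; case: HP => hEDR hS.
have [U0 [V0 [hU0 [hV0 [hdiag hchain]]]]] := hEDR _ _ P.
set S := U0 *m P *m V0 in hdiag hchain.
pose nz (n : nat) := [exists i : 'I_m, exists j : 'I_k,
   [&& (i == n :> nat), (j == n :> nat) & S i j != 0]].
have [exnz|nonz] := boolP [exists n : 'I_m, nz n]; last first.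
  exists 0%N, U0, V0; split => //; rewrite pid_mx_0 -/S.
  apply/matrixP => i j; rewrite [X in _ = X]mxE.
  case: (eqVneq (i : nat) j) => [e|/eqP ne]; last by rewrite hdiag.
  apply/eqP; apply: contraR nonz => hne; apply/existsP; exists i.
  by apply/existsP; exists i; apply/existsP; exists j; rewrite eqxx -e eqxx hne.
have exP : exists n, nz n by case/existsP: exnz => n hn; exists (n : nat).
have ubP : forall n, nz n -> (n <= m)%N.
  move=> n /existsP [i /existsP [j /and3P [/eqP <- _ _]]]; exact: ltnW.
case: (ex_maxnP exP ubP) => i0 hi0 hmax.
case/existsP: hi0 => a0 /existsP [b0 /and3P [/eqP ha0 /eqP hb0 hab]].
set a := S a0 b0 in hab.
have hdvd : forall (i : 'I_m) (j : 'I_k), (i : nat) = j -> S i j != 0 -> dvdR (S i j) a.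
  move=> i j e hne; apply: hchain => //; first by rewrite ha0 hb0.
  rewrite ha0; apply: hmax; apply/existsP; exists i; apply/existsP; exists j.
  by rewrite eqxx -e eqxx hne.
(* torsion elements are killed by a *)
have htors : forall (c : R) (y : 'rV[R]_k) (x : 'rV[R]_m), c != 0 ->
    c *: y = x *m P -> exists z : 'rV[R]_m, a *: y = z *m P.
  move=> c y x hc hcy.
  pose y' := y *m V0; pose x' := x *m invmx U0.
  have hcy' : c *: y' = x' *m S.
    by rewrite /y' scalemxAl hcy /x' /S !mulmxA mulmxKV.
  have zeroish : forall j : 'I_k, (forall i : 'I_m, (i : nat) = j -> S i j = 0) -> y' 0 j = 0.
    move=> j hj; have := congr1 (fun M : 'rV[R]_k => M 0 j) hcy'.
    rewrite /= (diag_zero hdiag) // mxE => /eqP; rewrite mulf_eq0 (negPf hc) /=.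
    by move/eqP.
  have hex : forall i : 'I_m, exists e : R, forall j : 'I_k, (i : nat) = j -> e * S i j = a * y' 0 j.
    move=> i; case: (ltnP i k) => hik; last first.
      by exists 0 => j e; exfalso; move: (ltn_ord j); rewrite -e ltnNge hik.
    pose j0 : 'I_k := Ordinal hik.
    case: (eqVneq (S i j0) 0) => hs.
      exists 0 => j e.
      have ej : j = j0 by apply: val_inj; rewrite /= -e.
      rewrite mul0r zeroish ?mulr0 // => i' e'.
      have -> : i' = i by apply: val_inj; rewrite /= e' -e.
      by rewrite ej.
    case: (hdvd i j0 erefl hs) => q hq.
    exists (q * y' 0 j0) => j e.
    have -> : j = j0 by apply: val_inj; rewrite /= -e.
    by rewrite hq mulrAC.
  have [e he] := fin_all_exists hex.
  exists ((\row_i e i) *m U0).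
  have hz : (\row_i e i) *m S = a *: y'.
    apply/matrixP => i0' j; rewrite (ord1 i0') [RHS]mxE.
    case: (ltnP j m) => hjm.
      rewrite (diag_entry hdiag _ (i := Ordinal hjm)) // mxE.
      exact: he.
    rewrite (diag_zero hdiag) ?zeroish ?mulr0 // => i e'; exfalso;
      by move: (ltn_ord i); rewrite e' ltnNge hjm.
  have ey : y = y' *m invmx V0 by rewrite /y' mulmxK.
  by rewrite ey scalemxAl -hz /S !mulmxA mulmxK.
pose w : 'rV[R]_k := delta_mx 0 b0 *m invmx V0.
pose x0 : 'rV[R]_m := delta_mx 0 a0 *m U0.
have hrowS : row a0 S = a *: delta_mx 0 b0.
  apply/matrixP => i j; rewrite (ord1 i) [LHS]mxE [RHS]mxE [X in _ * X]mxE eqxx /=.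
  case: (eqVneq j b0) => [->|hj]; first by rewrite mulr1.
  rewrite mulr0 hdiag // => e; move/eqP: hj; apply; apply: val_inj.
  by rewrite /= -e ha0 hb0.
have haw : a *: w = x0 *m P.
  by rewrite /w scalemxAl -hrowS rowE /S /x0 !mulmxA mulmxK.
have hD : d a *: w + a *: Dmod d B w = Dmod d A x0 *m P.
  by rewrite -hdP -haw /Dmod map_mx_dZ // -scalemxAl scalerDr addrA.
have [z1 hz1] : exists z1 : 'rV[R]_m, a *: Dmod d B w = z1 *m P.
  apply: (htors (a * a) _ (a *: Dmod d A x0 - d a *: x0)).
    by rewrite mulf_neq0.
  have hD' : a *: Dmod d B w = Dmod d A x0 *m P - d a *: w by rewrite -hD addrC addKr.
  rewrite -scalerA hD' scalerBr mulmxBl -!scalemxAl -haw !scalerA.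
  by rewrite (mulrC (d a)).
have hda : d a *: w = (Dmod d A x0 - z1) *m P by rewrite mulmxBl -hz1 -hD addrK.
have hdvda : dvdR a (d a).
  have e2 : (Dmod d A x0 - z1) *m P *m V0 = ((Dmod d A x0 - z1) *m invmx U0) *m S.
    by rewrite /S !mulmxA mulmxKV.
  have h := congr1 (fun M : 'rV[R]_k => (M *m V0) 0 b0) hda.
  rewrite /= e2 (diag_entry hdiag _ (etrans ha0 (esym hb0))) in h.
  rewrite /w -scalemxAl mulmxKV // mxE [X in _ * X = _]mxE !eqxx mulr1 in h.
  by exists (((Dmod d A x0 - z1) *m invmx U0) 0 a0).
have hau : a \is a GRing.unit.
  case: hdvda => q hq.
  have hstab : forall x, pideal a x -> pideal a (d x).
    move=> x [r ->]; exists (d r + r * q); by rewrite dM // hq mulrDl mulrA.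
  case: (hS a hstab) => [h0|h1].
    by exfalso; move/eqP: hab; apply; apply/(h0 a); exists 1; rewrite mul1r.
  case: (h1 1) => r hr; apply/unitrPr; exists r; by rewrite mulrC.
have hunit : forall (i : 'I_m) (j : 'I_k), (i : nat) = j -> S i j != 0 -> S i j \is a GRing.unit.
  move=> i j e hne; case: (hdvd i j e hne) => q hq.
  by move: hau; rewrite hq unitrM => /andP [].
have hle : forall (i : 'I_m) (j : 'I_k), (i : nat) = j -> (i <= i0)%N -> S i j != 0.
  move=> i j e hi; apply/eqP => h0.
  have [q hq] : dvdR (S i j) (S a0 b0).
    by apply: hchain => //; [rewrite ha0 hb0 | rewrite ha0].
  by move: hq; rewrite h0 mulr0 => hq; move/eqP: hab; apply.
have hgt : forall (i : 'I_m) (j : 'I_k), (i : nat) = j -> (i0 < i)%N -> S i j = 0.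
  move=> i j e hi; apply/eqP; apply: contraTT hi => hne; rewrite -leqNgt.
  apply: hmax; apply/existsP; exists i; apply/existsP; exists j.
  by rewrite eqxx -e eqxx hne.
have hex : forall i : 'I_m, exists e : R, e \is a GRing.unit /\
    forall j : 'I_k, (i : nat) = j -> e * S i j = ((i < i0.+1)%N)%:R.
  move=> i; case: (leqP i i0) => hi.
    have hik : (i < k)%N by rewrite (leq_ltn_trans hi) // -hb0 ltn_ord.
    pose j0 : 'I_k := Ordinal hik.
    have hu := hunit i j0 erefl (hle i j0 erefl hi).
    exists (S i j0)^-1; split; first by rewrite unitrV.
    move=> j e; have -> : j = j0 by apply: val_inj; rewrite /= -e.
    by rewrite mulVr // ltnS hi.
  exists 1; split; first exact: unitr1.
  by move=> j e; rewrite hgt // mulr0 ltnS leqNgt hi.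
have [e he] := fin_all_exists hex.
exists i0.+1, (diag_mx (\row_i e i) *m U0), V0; split => //.
- by rewrite -ha0 ltn_ord.
- by rewrite -hb0 ltn_ord.
- rewrite unitmx_mul hU0 andbT unitmxE det_diag; apply: unitr_prod => i _.
  by rewrite mxE; case: (he i).
have -> : diag_mx (\row_i e i) *m U0 *m P *m V0 = diag_mx (\row_i e i) *m S.
  by rewrite /S !mulmxA.
rewrite mul_diag_mx; apply/matrixP => i j.
rewrite [LHS]mxE [RHS]mxE [X in X * _]mxE.
case: (eqVneq (i : nat) j) => [e'|ne].
  by case: (he i) => _ h; rewrite (h j e') e'.
by rewrite hdiag ?mulr0 ?(negPf ne) //; apply/eqP.
Qed.

End Core.

Theorem lemma3p4 (R : idomainType) (d : R -> R)
  (Hd : is_derivation d) (HP : property_P d) :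
  (* (i) kernel and cokernel are finite free differential modules *)
  (forall m k (A : 'M[R]_m) (B : 'M[R]_k) (P : 'M[R]_(m, k)),
     is_dmorphism d A B P ->
     (exists r (C : 'M[R]_r) (K : 'M[R]_(r, m)),
        is_dmorphism d C A K /\
        injective (fun y : 'rV[R]_r => y *m K) /\
        (forall x : 'rV[R]_m, x *m P = 0 <-> exists y, x = y *m K)) /\
     (exists r (C : 'M[R]_r) (Q : 'M[R]_(k, r)),
        is_dmorphism d B C Q /\
        (forall z : 'rV[R]_r, exists y : 'rV[R]_k, z = y *m Q) /\
        (forall y : 'rV[R]_k, y *m Q = 0 <-> exists x, y = x *m P))) /\
  (* (ii) injective morphism between modules of equal rank is an isomorphism *)
  (forall m (A B : 'M[R]_m) (P : 'M[R]_m),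
     is_dmorphism d A B P -> injective (fun x : 'rV[R]_m => x *m P) ->
     exists Q : 'M[R]_m,
       is_dmorphism d B A Q /\ P *m Q = 1%:M /\ Q *m P = 1%:M) /\
  (* (iii) exterior powers of an injective morphism are injective *)
  (forall m k (A : 'M[R]_m) (B : 'M[R]_k) (P : 'M[R]_(m, k)),
     is_dmorphism d A B P -> injective (fun x : 'rV[R]_m => x *m P) ->
     forall n : nat, injective (@wedge_map R m k n P)).
Proof.
split; [|split].
- move=> m k A B P hdP.
  have [r [U [V [hrm hrk hU hV hUPV]]]] := core Hd HP hdP.
  split.
  + exists (m - r)%N, (Cker d r A U), (Kmx r U).
    split; first exact: (Cker_dmorph Hd hrm hrk hU hV hUPV hdP).
    split.
      apply: (can_inj (g := fun z => z *m Lmx r U)) => z /=.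
      by rewrite -mulmxA KL // mulmx1.
    move=> x; split => [hx|[y ->]].
      by exists (x *m Lmx r U); exact: (ker_mat hrk hU hV hUPV hx).
    by rewrite -mulmxA (KP hrm hU hV hUPV) mulmx0.
  + exists (k - r)%N, (Ccok d r B V), (Qmx r V).
    split; first exact: (Ccok_dmorph Hd hrm hrk hU hV hUPV hdP).
    split.
      by move=> z; exists (z *m Qtmx r V); rewrite -mulmxA QtQ // mulmx1.
    move=> y; split => [hy|[x ->]].
      by exists (y *m V *m pid_mx r *m U); exact: (coker_mat hrm hU hV hUPV hy).
    by rewrite -mulmxA (PQ hrk hU hV hUPV) mulmx0.
- move=> m A B P hdP hinj.
  have [r [U [V [hrm _ hU hV hUPV]]]] := core Hd HP hdP.
  exact: (sq_iso Hd hrm hU hV hUPV hdP hinj).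
- move=> m k A B P hdP hinj n.
  have [r [U [V [hrm hrk hU hV hUPV]]]] := core Hd HP hdP.
  exact: (wedge_inj (rinv hrm hrk hU hV hUPV hinj)).
Qed.
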